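(* Suppose $S \subset \mathbb{R}^2$ is compact, with both $S$ and $S^\mathsf{c}$ satisfying the $r$-rolling condition. There are constants $A_0,A_1 > 0$ depending only on $r$ and $\operatorname{diam}(S)$ such that $|\mathcal{E}(\partial S)|\leq A_0$ and $\lambda (\partial S) \leq A_1$.
   Context: A set $T\subset\mathbb{R}^2$ satisfies the $r$-rolling condition ($r>0$) if for every $x \in \partial T$ there is an open ball $B$ of radius $r$ with $B \cap T = \emptyset$ and $x \in \partial B$. $S^\mathsf{c}=\mathbb{R}^2\setminus S$, $\operatorname{diam}(S)=\sup\{\|x-y\|:x,y\in S\}$. $\mathcal{E}(T)$ denotes the Euler–Poincaré characteristic of $T$, and $\lambda$ the one-dimensional Hausdorff measure (length) on $\mathbb{R}^2$. *)

(* Defs.v *)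
From HB Require Import structures.
From mathcomp Require Import all_boot all_order all_algebra.
From mathcomp Require Import all_classical all_reals all_analysis.
Set Implicit Arguments. Unset Strict Implicit. Unset Printing Implicit Defensive.
Import Order.TTheory GRing.Theory Num.Theory.
Import numFieldNormedType.Exports.
Local Open Scope classical_set_scope.
Local Open Scope ring_scope.
Local Open Scope card_scope.

(* The plane R^2 is modelled as R * R with its product topology (which is the
   Euclidean topology); the Euclidean distance is written out explicitly. *)
Section Plane.
Variable R : realType.
Local Notation plane := (R * R)%type.

Definition eucl (x y : plane) : R :=
  Num.sqrt ((x.1 - y.1) ^+ 2 + (x.2 - y.2) ^+ 2).

Definition eball (c : plane) (r : R) : set plane := [set y | eucl c y < r].

Definition boundary (T : set plane) : set plane := closure T `\` interior T.

Definition diam (S : set plane) : \bar R :=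
  ereal_sup [set (eucl x y)%:E | x in S & y in S].

Definition rolling (r : R) (T : set plane) : Prop :=
  forall x, boundary T x ->
    exists c : plane, eball c r `&` T = set0 /\ eucl c x = r.

Definition hausdorff1_delta (delta : R) (A : set plane) : \bar R :=
  ereal_inf [set (\sum_(0 <= i <oo) maxe 0%E (diam (U i)))%E
            | U in [set U : nat -> set plane |
                     A `<=` \bigcup_i U i /\ forall i, (diam (U i) <= delta%:E)%E]].

Definition hausdorff1 (A : set plane) : \bar R :=
  ereal_sup [set hausdorff1_delta delta A | delta in [set delta : R | 0 < delta]].

Definition bounded_plane (C : set plane) : Prop :=
  exists M : R, forall x, C x -> eucl (0, 0) x <= M.

(* Euler–Poincaré characteristic of a planar set T (with finitely many
   components and holes): number of connected components of T minus the
   number of bounded connected components of its complement. *)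
Definition euler_char (T : set plane) (e : int) : Prop :=
  exists n m : nat,
    [set connected_component T x | x in T] #= `I_n /\
    [set C | exists2 x, (~` T) x & C = connected_component (~` T) x
                                  /\ bounded_plane C] #= `I_m /\
    e = (n%:Z - m%:Z)%R.
End Plane.
Notation plane R := (R * R)%type.

(* Main.v *)
From HB Require Import structures.
From mathcomp Require Import all_boot all_order all_algebra.
From mathcomp Require Import all_classical all_reals all_analysis.
From mathcomp Require Import ring lra zify.
Require Import Defs.
Import Order.TTheory GRing.Theory Num.Theory.
Local Open Scope classical_set_scope.
Import numFieldNormedType.Exports.
Local Open Scope ring_scope.
Local Open Scope card_scope.
Set Implicit Arguments. Unset Strict Implicit. Unset Printing Implicit Defensive.

Lemma count_bound {T} (X : set T) (f : T -> nat) (K : nat) :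
  (forall x, X x -> (f x < K)%N) ->
  (forall x y, X x -> X y -> f x = f y -> x = y) ->
  exists n, X #= `I_n /\ (n <= K)%N.
Proof.
move=> hf hi.
have le : X #<= `I_K.
  apply/pcard_leP; apply/injfunPex; exists f.
    by move=> x Xx; exact: hf.
  by move=> x y; rewrite !in_setE; exact: hi.
have [n hn] : finite_set X by apply: card_le_finite le (finite_II K).
exists n; split => //.
rewrite -card_le_II; apply: card_le_trans le.
by move: hn; rewrite card_eq_le => /andP[].
Qed.

Section Ser.
Variable R : realType.
Local Open Scope ereal_scope.
Lemma series_bound (u : nat -> \bar R) (K : nat) (c : R) :
  (forall i, 0 <= u i) -> (forall i, (K <= i)%N -> u i = 0) ->
  (forall i, u i <= c%:E) ->
  \sum_(0 <= i <oo) u i <= ((K%:R * c)%R)%:E.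
Proof.
move=> u0 uK uc.
rewrite (@nneseries_split R u 0 K); last by move=> k _; exact: u0.
rewrite add0n eseries0; last by move=> i Ki _; exact: uK.
rewrite adde0.
apply: le_trans (_ : \sum_(0 <= i < K) c%:E <= _).
  by apply: lee_sum => i _; exact: uc.
rewrite sumEFin lee_fin sumr_const_nat subn0 mulr_natl.
by [].
Qed.
End Ser.

Section Grid.
Variable R : realType.
Variables (D sg : R).
Hypotheses (D0 : 0 <= D) (sg0 : 0 < sg).

Definition idx (c : R) : nat := Num.truncn ((c + D) / sg).
Definition NN : nat := (Num.truncn ((D + D) / sg)).+1.

Lemma idx_lt c : `|c| <= D -> (idx c < NN)%N.
Proof.
move=> hc; rewrite /idx /NN ltnS; apply: le_truncn.
rewrite ler_pM2r ?invr_gt0 //.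
by move: hc; rewrite ler_norml => /andP[? ?]; lra.
Qed.

Lemma idx_eq c c' : `|c| <= D -> `|c'| <= D -> idx c = idx c' -> `|c - c'| < sg.
Proof.
move=> h h' e.
have p1 : 0 <= (c + D) / sg.
  by apply: divr_ge0; [move: h; rewrite ler_norml => /andP[? ?]; lra | exact: ltW].
have p2 : 0 <= (c' + D) / sg.
  by apply: divr_ge0; [move: h'; rewrite ler_norml => /andP[? ?]; lra | exact: ltW].
have /andP[a1 a2] := truncn_itv p1; have /andP[b1 b2] := truncn_itv p2.
rewrite -/(idx c) e in a1 a2; rewrite -/(idx c') in b1 b2.
set k := (idx c')%:R in a1 a2 b1 b2.
have e1 : (idx c').+1%:R = k + 1 :> R by rewrite -natr1.
rewrite e1 in a2 b2.
rewrite ler_pdivlMr // in a1; rewrite ltr_pdivrMr // in a2.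
rewrite ler_pdivlMr // in b1; rewrite ltr_pdivrMr // in b2.
rewrite ltr_norml; apply/andP; split; nra.
Qed.

Lemma code_dec (a b a' b' N : nat) : (b < N)%N -> (b' < N)%N ->
  (a * N + b = a' * N + b')%N -> a = a' /\ b = b'.
Proof.
move=> hb hb' e.
have N0 : (0 < N)%N by apply: leq_ltn_trans hb.
have eb : b = b'.
  by have := congr1 (modn^~ N) e; rewrite !modnMDl !modn_small.
split => //; move/eqP: e; rewrite eb eqn_add2r eqn_pmul2r //; by move/eqP.
Qed.

End Grid.

Definition A0c (R : realType) (r d : R) : R :=
  (3 * (NN `|d| (r / 64) * NN `|d| (r / 64)))%:R + 1.
Definition A1c (R : realType) (r d : R) : R :=
  4 * (r / 8) * (NN `|d| (r / 64) * NN `|d| (r / 64))%:R + 1.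

Section Geo.
Variable R : realType.
Implicit Types x y z p q : (R * R)%type.

Definition sq x y : R := (x.1 - y.1) ^+ 2 + (x.2 - y.2) ^+ 2.

Lemma sq_ge0 x y : 0 <= sq x y.
Proof. rewrite /sq; apply: addr_ge0; exact: sqr_ge0. Qed.

Lemma sqC x y : sq x y = sq y x.
Proof. rewrite /sq; ring. Qed.

Lemma euclE x y : eucl x y = Num.sqrt (sq x y).
Proof. by []. Qed.

Lemma eucl_ge0 x y : 0 <= eucl x y.
Proof. exact: sqrtr_ge0. Qed.

Lemma euclC x y : eucl x y = eucl y x.
Proof. by rewrite !euclE sqC. Qed.

Lemma eucl_sq x y : eucl x y ^+ 2 = sq x y.
Proof. by rewrite euclE sqr_sqrtr // sq_ge0. Qed.

Lemma eucl_lt x y r : 0 <= r -> (eucl x y < r) = (sq x y < r ^+ 2).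
Proof.
move=> r0; rewrite -eucl_sq; apply/idP/idP => H.
  by rewrite ltr_pXn2r // ?nnegrE ?eucl_ge0.
by rewrite -(ltr_pXn2r (_ : (0 < 2)%N)) // ?nnegrE ?eucl_ge0.
Qed.

Lemma eucl_le x y r : 0 <= r -> (eucl x y <= r) = (sq x y <= r ^+ 2).
Proof.
move=> r0; rewrite -eucl_sq; rewrite ler_pXn2r // ?nnegrE ?eucl_ge0 //.
Qed.

Lemma eucl_eq x y r : eucl x y = r -> sq x y = r ^+ 2.
Proof. by move=> <-; rewrite eucl_sq. Qed.


Lemma cs_sqrt (u1 u2 w1 w2 : R) :
  u1 * w1 + u2 * w2 <= Num.sqrt (u1^+2 + u2^+2) * Num.sqrt (w1^+2 + w2^+2).
Proof.
rewrite -sqrtrM; last by apply: addr_ge0; exact: sqr_ge0.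
have [h|h] := leP (u1 * w1 + u2 * w2) 0.
  apply: le_trans h _; exact: sqrtr_ge0.
rewrite -(@ger0_norm _ (u1 * w1 + u2 * w2)); last exact: ltW.
rewrite -sqrtr_sqr; rewrite ler_sqrt; last by rewrite mulr_ge0 // addr_ge0 // sqr_ge0.
have : 0 <= (u1 * w2 - u2 * w1) ^+ 2 by apply: sqr_ge0.
move=> H; rewrite -subr_ge0; apply: le_trans H _; rewrite le_eqVlt; apply/orP; left; apply/eqP; ring.
Qed.

Lemma eucl_tri x y z : eucl x z <= eucl x y + eucl y z.
Proof.
rewrite eucl_le; last by apply: addr_ge0; exact: eucl_ge0.
have h := cs_sqrt (x.1 - y.1) (x.2 - y.2) (y.1 - z.1) (y.2 - z.2).
have e1 := eucl_sq x y; have e2 := eucl_sq y z.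
rewrite /sq in e1 e2 *; rewrite !euclE /sq in h *.
set a := Num.sqrt _ in h e1 *; set b := Num.sqrt _ in h e2 *.
have -> : (x.1 - z.1) ^+ 2 + (x.2 - z.2) ^+ 2 =
  ((x.1 - y.1) ^+ 2 + (x.2 - y.2) ^+ 2) + ((y.1 - z.1) ^+ 2 + (y.2 - z.2) ^+ 2)
  + 2 * ((x.1 - y.1) * (y.1 - z.1) + (x.2 - y.2) * (y.2 - z.2)) by ring.
rewrite -e1 -e2 /a /b. rewrite /a /b in h. 
set A := Num.sqrt _; set B := Num.sqrt _. rewrite -/A -/B in h.
have -> : (A + B) ^+ 2 = A ^+ 2 + B ^+ 2 + 2 * (A * B) by ring.
by rewrite lerD2l ler_pM2l.
Qed.

Lemma coord1_le x y : `|x.1 - y.1| <= eucl x y.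
Proof.
rewrite euclE -sqrtr_sqr ler_sqrt; last exact: sq_ge0.
have := sqr_ge0 (x.2 - y.2); rewrite /sq; lra.
Qed.

Lemma coord2_le x y : `|x.2 - y.2| <= eucl x y.
Proof.
rewrite euclE -sqrtr_sqr ler_sqrt; last exact: sq_ge0.
have := sqr_ge0 (x.1 - y.1); rewrite /sq; lra.
Qed.

Lemma eucl_le_coord x y : eucl x y <= `|x.1 - y.1| + `|x.2 - y.2|.
Proof.
rewrite eucl_le; last by apply: addr_ge0.
rewrite /sq -(real_normK (num_real (x.1 - y.1))) -(real_normK (num_real (x.2 - y.2))).
have h1 := normr_ge0 (x.1 - y.1); have h2 := normr_ge0 (x.2 - y.2).
set a := `|_| in h1 *; set b := `|_| in h2 *.
nra.
Qed.


Lemma near_coord (x : (R * R)%type) (P : (R * R)%type -> Prop) :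
  (exists2 e : R, 0 < e & forall y, `|y.1 - x.1| < e -> `|y.2 - x.2| < e -> P y) ->
  \forall y \near x, P y.
Proof.
move=> [e e0 H]; apply/nbhs_normP; exists e => // y /=.
rewrite prod_normE /= gt_max => /andP[h1 h2]; apply: H.
  by rewrite distrC. by rewrite distrC.
Qed.

Lemma eball_open (c : (R * R)%type) (r : R) : open (eball c r).
Proof.
rewrite openE => y /= hy; rewrite /interior.
apply: near_coord; exists ((r - eucl c y) / 2); first by rewrite divr_gt0 // subr_gt0.
move=> z h1 h2; rewrite /eball /=.
apply: (le_lt_trans (eucl_tri c y z)).
apply: (le_lt_trans (lerD (lexx _) (eucl_le_coord y z))).
rewrite distrC in h1; rewrite distrC in h2.
lra.
Qed.

Lemma open_sep (A B : set (R * R)%type) : open A -> open B -> A `&` B = set0 ->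
  separated A B.
Proof.
move=> oA oB AB; split.
  apply/seteqP; split => // x [cx Bx].
  have [y [Ay By]] := cx B (open_nbhs_nbhs (conj oB Bx)).
  by have : (A `&` B) y by []; rewrite AB.
apply/seteqP; split => // x [Ax cx].
have [y [By Ay]] := cx A (open_nbhs_nbhs (conj oA Ax)).
by have : (A `&` B) y by []; rewrite AB.
Qed.

Lemma bdry_closed (S : set (R * R)%type) x : closed S ->
  boundary S x <-> S x /\ ~ S° x.
Proof.
by move=> cS; rewrite /boundary -(closure_id S).1 //.
Qed.

Lemma bdryC (S : set (R * R)%type) : closed S -> boundary (~` S) = boundary S.
Proof.
move=> cS; rewrite /boundary closure_setC interiorC -(closure_id S).1 //.
apply/seteqP; split => x /= [h1 h2].
  by split => //; apply: contrapT.
by split => // /h1.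
Qed.

Lemma crossing (S C : set (R * R)%type) : closed S -> connected C ->
  (exists y, C y /\ S y) -> (exists y, C y /\ ~ S y) ->
  exists y, C y /\ boundary S y.
Proof.
move=> cS cC [y1 [Cy1 Sy1]] [y2 [Cy2 Sy2]].
apply: contrapT => hno.
have sub : C `<=` S° `|` ~` S.
  move=> y Cy; have [Sy|Sy] := pselect (S y); last by right.
  have [iy|iy] := pselect (S° y); first by left.
  by exfalso; apply: hno; exists y; split => //; apply/bdry_closed.
have sep : separated S° (~` S).
  apply: open_sep; [exact: open_interior | exact: closed_openC |].
  apply/seteqP; split => // y [/interior_subset ? ?]; by [].
have [h|h] := connected_subset sep sub cC.
  by have /interior_subset := h _ Cy2.
by have := h _ Cy1.
Qed.

End Geo.

Section C.
Variable R : realType.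
Local Notation P := (R * R)%type.

Lemma cont_lip (g : R -> P) (K : R) : 0 < K ->
  (forall s s', `|(g s).1 - (g s').1| <= K * `|s - s'| /\
                `|(g s).2 - (g s').2| <= K * `|s - s'|) -> continuous g.
Proof.
move=> K0 H s; apply/cvgrPdist_lt => e e0.
apply/nbhs_normP; exists (e / K); first by rewrite /= divr_gt0.
move=> t /= hst.
have [h1 h2] := H s t.
rewrite prod_normE /= gt_max.
have : K * `|s - t| < e by rewrite mulrC -ltr_pdivlMr.
move=> hk; apply/andP; split.
  rewrite -opprB normrN; apply: le_lt_trans hk; rewrite -(normrN (s - t)) opprB. 
  by have := H t s => -[+ _].
rewrite -opprB normrN; apply: le_lt_trans hk; rewrite -(normrN (s - t)) opprB.
by have := H t s => -[_ +].
Qed.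

Lemma connected_image_seg (g : R -> P) (K : R) (lo hi : R) : 0 < K ->
  (forall s s', `|(g s).1 - (g s').1| <= K * `|s - s'| /\
                `|(g s).2 - (g s').2| <= K * `|s - s'|) ->
  connected (g @` `[lo, hi]).
Proof.
move=> K0 H; apply: connected_continuous_connected; first exact: segment_connected.
exact/continuous_subspaceT/(cont_lip K0 H).
Qed.

End C.

Section Alg.
Variable R : realType.

Lemma abs_sq_le (a b : R) : 0 <= b -> -b <= a -> a <= b -> a ^+ 2 <= b ^+ 2.
Proof. move=> b0 h1 h2; nra. Qed.

Lemma sq_le_abs (a c : R) : `|a| <= c -> a ^+ 2 <= c ^+ 2.
Proof.
move=> h; have c0 : 0 <= c := le_trans (normr_ge0 a) h.
rewrite -real_normK ?num_real //; rewrite ler_pXn2r // nnegrE //.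
Qed.

Lemma step1 (r h W A B E c beta : R) : 0 < h -> r = 8 * h ->
  0 < W -> W <= 2 * h ^+ 2 ->
  A ^+ 2 + B ^+ 2 = r ^+ 2 * W ->
  - W <= 2 * B -> 2 * B <= W ->
  - W <= 2 * E -> 2 * E <= W ->
  beta ^+ 2 + c ^+ 2 = r ^+ 4 ->
  - (r ^+ 2 * E) = A * c + B * beta ->
  c ^+ 2 <= 4 * r ^+ 2 * h ^+ 2.
Proof.
move=> h0 rE W0 Wle hAB hB1 hB2 hE1 hE2 hbc hid.
have r0 : 0 < r by lra.
have r2 : 0 < r ^+ 2 by apply: exprn_gt0.
have hB : B ^+ 2 <= W ^+ 2 / 4.
  have := abs_sq_le (ltW W0) hB1 hB2; lra.
have hbeta : beta ^+ 2 <= r ^+ 4 by have := sqr_ge0 c; lra.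
have hbeta' : -(r ^+ 2) <= beta /\ beta <= r ^+ 2.
  have e4 : r ^+ 4 = (r ^+ 2) ^+ 2 by rewrite -exprM.
  rewrite e4 in hbeta; have r2' := ltW r2; split; nra.
have hAc : (A * c) ^+ 2 <= (r ^+ 2 * W) ^+ 2.
  have : - (r ^+ 2 * W) <= A * c /\ A * c <= r ^+ 2 * W.
    have hAc : A * c = - (r ^+ 2 * E) - B * beta by lra.
    case: hbeta' => b1 b2.
    have hBb : - (r ^+ 2 * W / 2) <= B * beta /\ B * beta <= r ^+ 2 * W / 2.
      split; nra.
    case: hBb => b3 b4. rewrite hAc; split; nra.
  case=> q1 q2; apply: abs_sq_le => //; apply: mulr_ge0; [exact: ltW | exact: ltW].
have hA : r ^+ 2 * W / 2 <= A ^+ 2.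
  have : W ^+ 2 / 4 <= r ^+ 2 * W / 2 by rewrite rE; nra.
  lra.
have : c ^+ 2 * (r ^+ 2 * W / 2) <= r ^+ 4 * W ^+ 2.
  apply: le_trans (_ : c ^+ 2 * A ^+ 2 <= _).
    by apply: ler_wpM2l => //; apply: sqr_ge0.
  have -> : c ^+ 2 * A ^+ 2 = (A * c) ^+ 2 by ring.
  by move: hAc; have -> : (r ^+ 2 * W) ^+ 2 = r ^+ 4 * W ^+ 2 by ring.
move=> H.
have H2 : c ^+ 2 <= 2 * r ^+ 2 * W.
  have pos : 0 < r ^+ 2 * W / 2 by apply: divr_gt0 => //; apply: mulr_gt0.
  rewrite -(ler_pM2r pos).
  apply: le_trans H _; rewrite le_eqVlt; apply/orP; left; apply/eqP; field.
all: try done.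
nra.
Qed.


Lemma step2 (r h U D T al ga beta c : R) : 0 < h -> r = 8 * h ->
  0 <= U -> U <= 8 * h ^+ 2 ->
  al ^+ 2 + ga ^+ 2 = r ^+ 2 * U ->
  - U <= 2 * al -> 2 * al <= U ->
  beta ^+ 2 + c ^+ 2 = r ^+ 4 ->
  c ^+ 2 <= 4 * r ^+ 2 * h ^+ 2 ->
  r ^+ 2 * D = al * beta - ga * c ->
  D ^+ 2 + T ^+ 2 = r ^+ 2 * U ->
  D ^+ 2 <= T ^+ 2.
Proof.
move=> h0 rE U0 Ule hag ha1 ha2 hbc hc hid hDT.
have r0 : 0 < r by lra.
have r2 : 0 < r ^+ 2 by apply: exprn_gt0.
have r4 : 0 < r ^+ 4 by apply: exprn_gt0.
have hal : al ^+ 2 <= U ^+ 2 / 4 by have := abs_sq_le U0 ha1 ha2; lra.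
have hbeta : beta ^+ 2 <= r ^+ 4 by have := sqr_ge0 c; lra.
have hga : ga ^+ 2 <= r ^+ 2 * U by have := sqr_ge0 al; lra.
have q1 : (r ^+ 2 * D) ^+ 2 <= 2 * (al ^+ 2 * beta ^+ 2) + 2 * (ga ^+ 2 * c ^+ 2).
  rewrite hid; have := sqr_ge0 (al * beta + ga * c); nra.
have q2 : al ^+ 2 * beta ^+ 2 <= U ^+ 2 / 4 * r ^+ 4.
  apply: le_trans (_ : al ^+ 2 * r ^+ 4 <= _).
    by apply: ler_wpM2l => //; apply: sqr_ge0.
  by apply: ler_wpM2r => //; apply: ltW.
have q3 : ga ^+ 2 * c ^+ 2 <= r ^+ 2 * U * (4 * r ^+ 2 * h ^+ 2).
  apply: le_trans (_ : ga ^+ 2 * (4 * r ^+ 2 * h ^+ 2) <= _).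
    by apply: ler_wpM2l => //; apply: sqr_ge0.
  apply: ler_wpM2r => //; apply: mulr_ge0; [apply: mulr_ge0; [by []| exact: ltW] | exact: sqr_ge0].
have q4 : r ^+ 4 * D ^+ 2 <= r ^+ 4 * (U ^+ 2 / 2 + 8 * h ^+ 2 * U).
  have -> : r ^+ 4 * D ^+ 2 = (r ^+ 2 * D) ^+ 2 by ring.
  apply: le_trans q1 _.
  have e4 : r ^+ 4 = r ^+ 2 * r ^+ 2 by rewrite -exprD.
  have -> : r ^+ 4 * (U ^+ 2 / 2 + 8 * h ^+ 2 * U) =
     2 * (U ^+ 2 / 4 * r ^+ 4) + 2 * (r ^+ 2 * U * (4 * r ^+ 2 * h ^+ 2)).
    by rewrite e4; field.
  lra.
rewrite ler_pM2l // in q4.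
have q5 : U ^+ 2 / 2 <= 4 * h ^+ 2 * U by nra.
have q6 : r ^+ 2 = 64 * h ^+ 2 by rewrite rE; ring.
have q7 : 0 <= h ^+ 2 * U by apply: mulr_ge0 => //; apply: sqr_ge0.
nra.
Qed.

End Alg.

Section Normal.
Variable R : realType.
Local Notation P := (R * R)%type.
Variables (S : set P) (r : R).
Hypotheses (r0 : 0 < r) (cS : closed S) (rS : rolling r S) (rSc : rolling r (~` S)).
Implicit Types x y v : P.

Definition nprop (x v : P) := v.1 ^+ 2 + v.2 ^+ 2 = r ^+ 2 /\
  (forall y, sq y (x.1 + v.1, x.2 + v.2) < r ^+ 2 -> ~ S y) /\
  (forall y, sq y (x.1 - v.1, x.2 - v.2) < r ^+ 2 -> S° y).

Lemma normal_ex x : boundary S x -> exists v, nprop x v.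
Proof.
move=> bx.
have [c1 [h1 e1]] := rS bx.
have bx' : boundary (~` S) x by rewrite bdryC.
have [c2 [h2 e2]] := rSc bx'.
have q1 := eucl_eq e1; have q2 := eucl_eq e2.
have far : 4 * r ^+ 2 <= sq c1 c2.
  rewrite leNgt; apply/negP => hlt.
  pose m : P := ((c1.1 + c2.1) / 2, (c1.2 + c2.2) / 2).
  have hm1 : eball c1 r m.
    rewrite /eball /= eucl_lt; last exact: ltW.
    have -> : sq c1 m = sq c1 c2 / 4 by rewrite /sq /m /=; field.
    lra.
  have hm2 : eball c2 r m.
    rewrite /eball /= eucl_lt; last exact: ltW.
    have -> : sq c2 m = sq c1 c2 / 4 by rewrite /sq /m /=; field.
    lra.
  have Sm : S m.
    apply: contrapT => nS.
    by have : (eball c2 r `&` ~` S) m by []; rewrite h2.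
  by have : (eball c1 r `&` S) m by []; rewrite h1.
have par : (c1.1 + c2.1 - 2 * x.1) ^+ 2 + (c1.2 + c2.2 - 2 * x.2) ^+ 2
   = 2 * sq c1 x + 2 * sq c2 x - sq c1 c2 by rewrite /sq; ring.
have z1 : c1.1 + c2.1 - 2 * x.1 = 0.
  have := sqr_ge0 (c1.2 + c2.2 - 2 * x.2); have := sqr_ge0 (c1.1 + c2.1 - 2 * x.1).
  move=> a b; apply/eqP; rewrite -sqrf_eq0; apply/eqP; lra.
have z2 : c1.2 + c2.2 - 2 * x.2 = 0.
  have := sqr_ge0 (c1.2 + c2.2 - 2 * x.2); have := sqr_ge0 (c1.1 + c2.1 - 2 * x.1).
  move=> a b; apply/eqP; rewrite -sqrf_eq0; apply/eqP; lra.
exists (c1.1 - x.1, c1.2 - x.2); split => /=.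
  by rewrite -q1 /sq; ring.
split.
  move=> y hy Sy.
  have : (eball c1 r `&` S) y.
    split => //; rewrite /eball /= eucl_lt; last exact: ltW.
    rewrite sqC; move: hy; rewrite /sq /=.
    have -> : x.1 + (c1.1 - x.1) = c1.1 by ring.
    by have -> : x.2 + (c1.2 - x.2) = c1.2 by ring.
  by rewrite h1.
have sub : eball c2 r `<=` S.
  move=> y hy; apply: contrapT => nS.
  by have : (eball c2 r `&` ~` S) y by []; rewrite h2.
rewrite (open_subsetE _ (@eball_open R c2 r)) in sub.
move=> y hy; apply: sub; rewrite /eball /= eucl_lt; last exact: ltW.
rewrite sqC; move: hy; rewrite /sq /=.
have -> : x.1 - (c1.1 - x.1) = c2.1 by lra.
by have -> : x.2 - (c1.2 - x.2) = c2.2 by lra.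
Qed.

Definition nu (x : P) : P := xget (0, 0) [set v | nprop x v].

Lemma nuP x : boundary S x -> nprop x (nu x).
Proof.
move=> bx; rewrite /nu; case: xgetP => //.
by move=> /(_ _ (projT2 (cid (normal_ex bx)))).
Qed.

Definition dd (y x v : P) : R := (y.1 - x.1) * v.1 + (y.2 - x.2) * v.2.

Lemma bdry_S x : boundary S x -> S x.
Proof. by move/(bdry_closed x cS) => []. Qed.

Lemma FI x y : boundary S x -> boundary S y ->
  0 <= sq y x - 2 * dd y x (nu x) /\ 0 <= sq y x + 2 * dd y x (nu x).
Proof.
move=> bx hby; have [n1 [n2 n3]] := nuP bx.
set v := nu x in n1 n2 n3 *.
have Sy := bdry_S hby.
have /(bdry_closed y cS) [_ niy] := hby.
split.
  have : ~ sq y (x.1 + v.1, x.2 + v.2) < r ^+ 2 by move=> /n2.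
  move/negP; rewrite -leNgt.
  have -> : sq y (x.1 + v.1, x.2 + v.2) = sq y x - 2 * dd y x v + r ^+ 2.
    by rewrite -n1 /sq /dd /=; ring.
  lra.
have : ~ sq y (x.1 - v.1, x.2 - v.2) < r ^+ 2 by move=> /n3.
move/negP; rewrite -leNgt.
have -> : sq y (x.1 - v.1, x.2 - v.2) = sq y x + 2 * dd y x v + r ^+ 2.
  by rewrite -n1 /sq /dd /=; ring.
lra.
Qed.


Definition rot (v : P) : P := (- v.2, v.1).
Definition hh := r / 8.

Lemma hh_gt0 : 0 < hh. Proof. have := r0; rewrite /hh; lra. Qed.
Lemma r_hh : r = 8 * hh. Proof. by rewrite /hh; field. Qed.

Lemma sq_tri3 x y z : sq x z <= 2 * sq x y + 2 * sq y z.
Proof.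
rewrite /sq; have := sqr_ge0 (x.1 - 2 * y.1 + z.1); have := sqr_ge0 (x.2 - 2 * y.2 + z.2).
nra.
Qed.

Lemma slope x0 x y : boundary S x0 -> boundary S x -> boundary S y ->
  sq x x0 <= 2 * hh ^+ 2 -> sq y x0 <= 2 * hh ^+ 2 ->
  dd y x (nu x0) ^+ 2 <= dd y x (rot (nu x0)) ^+ 2.
Proof.
move=> b0 bx hby hx hy.
have [n0 _] := nuP b0; have [nx _] := nuP bx.
set v0 := nu x0 in n0 *; set vx := nu x in nx *.
pose beta := v0.1 * vx.1 + v0.2 * vx.2.
pose c := - v0.2 * vx.1 + v0.1 * vx.2.
have hbc : beta ^+ 2 + c ^+ 2 = r ^+ 4.
  have -> : r ^+ 4 = r ^+ 2 * r ^+ 2 by rewrite -exprD.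
  by rewrite -{1}n0 -nx /beta /c; ring.
have hc : c ^+ 2 <= 4 * r ^+ 2 * hh ^+ 2.
  have [exx|nexx] := eqVneq x x0.
    have ev : vx = v0 by rewrite /vx /v0 exx.
    have -> : c = 0 by rewrite /c ev; ring.
    rewrite expr0n /=; apply: mulr_ge0; [apply: mulr_ge0 => //; exact: sqr_ge0 | exact: sqr_ge0].
  have W0 : 0 < sq x x0.
    rewrite lt_def sq_ge0 andbT; apply/negP => /eqP h0.
    apply/negP: nexx; rewrite negbK; apply/eqP.
    move: h0; rewrite /sq => h0.
    have := sqr_ge0 (x.1 - x0.1); have := sqr_ge0 (x.2 - x0.2) => a1 a2.
    have e1 : (x.1 - x0.1) ^+ 2 = 0 by lra.
    have e2 : (x.2 - x0.2) ^+ 2 = 0 by lra.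
    move/eqP: e1; rewrite sqrf_eq0 subr_eq0 => /eqP e1.
    move/eqP: e2; rewrite sqrf_eq0 subr_eq0 => /eqP e2.
    exact: injective_projections.
  have [fa fb] := FI b0 bx.
  have [fc fd] := FI bx b0.
  apply: (@step1 R r hh (sq x x0) (dd x x0 (rot v0)) (dd x x0 v0) (dd x0 x vx) c beta) => //.
  - exact: hh_gt0.
  - exact: r_hh.
  - by rewrite -n0 /dd /rot /sq /=; ring.
  - lra.
  - lra.
  - rewrite sqC in fc fd; lra.
  - rewrite sqC in fc fd; lra.
  - by rewrite /dd /c /beta /rot /=; rewrite -n0; ring.
have [fa fb] := FI bx hby.
apply: (@step2 R r hh (sq y x) _ _ (dd y x vx) (dd y x (rot vx)) beta c) => //.
- exact: hh_gt0.
- exact: r_hh.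
- exact: sq_ge0.
- have := sq_tri3 y x0 x; rewrite (sqC x0 x); lra.
- by rewrite -nx /dd /rot /sq /=; ring.
- lra.
- lra.
- by rewrite /dd /c /beta /rot /=; rewrite -nx; ring.
- by rewrite -n0 /dd /rot /sq /=; ring.
Qed.


Definition nz z : P := ((nu z).1 / r, (nu z).2 / r).
Arguments nz : simpl never.
Definition tz z : P := rot (nz z).
Definition mk z (a b : R) : P :=
  (z.1 + a * (tz z).1 + b * (nz z).1, z.2 + a * (tz z).2 + b * (nz z).2).

Lemma r_neq0 : r != 0. Proof. by rewrite gt_eqF. Qed.

Lemma nz_unit z : boundary S z -> (nz z).1 ^+ 2 + (nz z).2 ^+ 2 = 1.
Proof.
move=> bz; have [n _] := nuP bz; rewrite /nz /=.
have rn := r_neq0.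
rewrite !expr_div_n -mulrDl n divff //; exact: expf_neq0.
Qed.

Lemma mk_sq z a b a' b' : boundary S z ->
  sq (mk z a b) (mk z a' b') = (a - a') ^+ 2 + (b - b') ^+ 2.
Proof.
move=> bz; have u := nz_unit bz; rewrite /sq /mk /tz /rot.
set n1 := (nz z).1 in u *; set n2 := (nz z).2 in u *; rewrite /=.
have -> : (a - a') ^+ 2 + (b - b') ^+ 2 = ((a - a') ^+ 2 + (b - b') ^+ 2) * (n1 ^+ 2 + n2 ^+ 2).
  by rewrite u mulr1.
ring.
Qed.

Lemma mk0 z : mk z 0 0 = z.
Proof. by rewrite /mk !mul0r !addr0; case: z. Qed.

Lemma mk_coord z p : boundary S z ->
  p = mk z (dd p z (tz z)) (dd p z (nz z)).
Proof.
move=> bz; have u := nz_unit bz; rewrite /mk /dd /tz /rot.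
set n1 := (nz z).1 in u *; set n2 := (nz z).2 in u *; rewrite /=.
apply: injective_projections => /=.
  transitivity (z.1 + (p.1 - z.1) * (n1 ^+ 2 + n2 ^+ 2)); first by rewrite u mulr1; ring.
  ring.
transitivity (z.2 + (p.2 - z.2) * (n1 ^+ 2 + n2 ^+ 2)); first by rewrite u mulr1; ring.
ring.
Qed.

Lemma dd_mk_n z a b a' b' : boundary S z ->
  dd (mk z a b) (mk z a' b') (nz z) = b - b'.
Proof.
move=> bz; have u := nz_unit bz; rewrite /mk /dd /tz /rot.
set n1 := (nz z).1 in u *; set n2 := (nz z).2 in u *; rewrite /=.
have -> : b - b' = (b - b') * (n1 ^+ 2 + n2 ^+ 2) by rewrite u mulr1.
ring.
Qed.

Lemma dd_mk_t z a b a' b' : boundary S z ->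
  dd (mk z a b) (mk z a' b') (tz z) = a - a'.
Proof.
move=> bz; have u := nz_unit bz; rewrite /mk /dd /tz /rot.
set n1 := (nz z).1 in u *; set n2 := (nz z).2 in u *; rewrite /=.
have -> : a - a' = (a - a') * (n1 ^+ 2 + n2 ^+ 2) by rewrite u mulr1.
ring.
Qed.

Lemma slope_u z y1 y2 : boundary S z -> boundary S y1 -> boundary S y2 ->
  sq y1 z <= 2 * hh ^+ 2 -> sq y2 z <= 2 * hh ^+ 2 ->
  dd y2 y1 (nz z) ^+ 2 <= dd y2 y1 (tz z) ^+ 2.
Proof.
move=> bz b1 b2 h1 h2; have := slope bz b1 b2 h1 h2.
have e1 : dd y2 y1 (nu z) = r * dd y2 y1 (nz z).
  by rewrite /dd /nz /=; field; exact: r_neq0.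
have e2 : dd y2 y1 (rot (nu z)) = r * dd y2 y1 (tz z).
  by rewrite /dd /tz /nz /rot /=; field; exact: r_neq0.
rewrite e1 e2 !exprMn ler_pM2l //; exact: exprn_gt0.
Qed.

Lemma mk_out z a b : boundary S z -> a ^+ 2 + (b - r) ^+ 2 < r ^+ 2 -> ~ S (mk z a b).
Proof.
move=> bz hab; have [_ [n2 _]] := nuP bz; apply: n2.
have -> : ((z.1 + (nu z).1, z.2 + (nu z).2) : P) = mk z 0 r.
  rewrite /mk /nz /= !mul0r !addr0.
  apply: injective_projections; rewrite /=; field; exact: r_neq0.
by rewrite mk_sq // subr0.
Qed.

Lemma mk_in z a b : boundary S z -> a ^+ 2 + (b + r) ^+ 2 < r ^+ 2 -> S° (mk z a b).
Proof.
move=> bz hab; have [_ [_ n3]] := nuP bz; apply: n3.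
have -> : ((z.1 - (nu z).1, z.2 - (nu z).2) : P) = mk z 0 (- r).
  rewrite /mk /nz /= !mul0r !addr0.
  apply: injective_projections; rewrite /=; field; exact: r_neq0.
by rewrite mk_sq // opprK subr0.
Qed.

Lemma box_sq z a b : boundary S z -> `|a| <= hh -> `|b| <= hh ->
  sq (mk z a b) z <= 2 * hh ^+ 2.
Proof.
move=> bz ha hb; rewrite -{2}(mk0 z) mk_sq // !subr0.
have := sq_le_abs ha; have := sq_le_abs hb; lra.
Qed.

Lemma lip_line z a1 b1 a2 b2 : boundary S z ->
  `|a1| <= hh -> `|b1| <= hh -> `|a2| <= hh -> `|b2| <= hh ->
  boundary S (mk z a1 b1) -> boundary S (mk z a2 b2) ->
  (b2 - b1) ^+ 2 <= (a2 - a1) ^+ 2.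
Proof.
move=> bz h1 h2 h3 h4 c1 c2.
have := slope_u bz c1 c2 (box_sq bz h1 h2) (box_sq bz h3 h4).
by rewrite dd_mk_n // dd_mk_t.
Qed.

Lemma uniq_line z a b1 b2 : boundary S z ->
  `|a| <= hh -> `|b1| <= hh -> `|b2| <= hh ->
  boundary S (mk z a b1) -> boundary S (mk z a b2) -> b1 = b2.
Proof.
move=> bz h1 h2 h3 c1 c2.
have := lip_line bz h1 h2 h1 h3 c1 c2; rewrite subrr expr0n /=.
move=> h; have : (b2 - b1) ^+ 2 = 0 by apply/eqP; rewrite eq_le h sqr_ge0.
by move/eqP; rewrite sqrf_eq0 subr_eq0 => /eqP.
Qed.

Lemma bottom_in z a : boundary S z -> `|a| <= hh -> S° (mk z a (- hh)).
Proof.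
move=> bz ha; apply: mk_in => //.
have := sq_le_abs ha.
have := hh_gt0; rewrite r_hh; nra.
Qed.

Lemma top_out z a : boundary S z -> `|a| <= hh -> ~ S (mk z a hh).
Proof.
move=> bz ha; apply: mk_out => //.
have := sq_le_abs ha.
have := hh_gt0; rewrite r_hh; nra.
Qed.

Lemma nz_le1 z : boundary S z -> `|(nz z).1| <= 1 /\ `|(nz z).2| <= 1.
Proof.
move=> bz; have u := nz_unit bz.
have g1 := sqr_ge0 (nz z).1; have g2 := sqr_ge0 (nz z).2.
split; rewrite -(ler_pXn2r (_ : (0 < 2)%N)) ?nnegrE // ?real_normK ?num_real // expr1n; lra.
Qed.

Lemma mk_lip_b z a : boundary S z -> forall s s',
  `|(mk z a s).1 - (mk z a s').1| <= 1 * `|s - s'| /\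
  `|(mk z a s).2 - (mk z a s').2| <= 1 * `|s - s'|.
Proof.
move=> bz s s'; have [u1 u2] := nz_le1 bz; rewrite /mk.
set n1 := (nz z).1 in u1 *; set n2 := (nz z).2 in u2 *; rewrite /= !mul1r.
have -> : z.1 + a * (tz z).1 + s * n1 - (z.1 + a * (tz z).1 + s' * n1)
  = (s - s') * n1 by ring.
have -> : z.2 + a * (tz z).2 + s * n2 - (z.2 + a * (tz z).2 + s' * n2)
  = (s - s') * n2 by ring.
split; rewrite normrM ler_piMr //.
Qed.

Lemma mk_lip_a z b : boundary S z -> forall s s',
  `|(mk z s b).1 - (mk z s' b).1| <= 1 * `|s - s'| /\
  `|(mk z s b).2 - (mk z s' b).2| <= 1 * `|s - s'|.
Proof.
move=> bz s s'; have [u1 u2] := nz_le1 bz; rewrite /mk /tz /rot.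
set n1 := (nz z).1 in u1 *; set n2 := (nz z).2 in u2 *; rewrite /= !mul1r.
have -> : z.1 + s * - n2 + b * n1 - (z.1 + s' * - n2 + b * n1)
  = (s - s') * - n2 by ring.
have -> : z.2 + s * n1 + b * n2 - (z.2 + s' * n1 + b * n2)
  = (s - s') * n1 by ring.
split; rewrite normrM ?normrN ler_piMr //.
Qed.


Lemma abs_le_sq (a c : R) : 0 <= c -> a ^+ 2 <= c ^+ 2 -> `|a| <= c.
Proof.
move=> c0 h; rewrite -(ler_pXn2r (_ : (0 < 2)%N)) ?nnegrE // ?real_normK ?num_real //.
Qed.

Lemma bdry_mk z y : boundary S z -> sq y z <= hh ^+ 2 ->
  `|dd y z (tz z)| <= hh /\ `|dd y z (nz z)| <= hh.
Proof.
move=> bz h.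
have e : sq y z = dd y z (tz z) ^+ 2 + dd y z (nz z) ^+ 2.
  by have := mk_sq (dd y z (tz z)) (dd y z (nz z)) 0 0 bz; rewrite -mk_coord // mk0 !subr0.
have g1 := sqr_ge0 (dd y z (tz z)); have g2 := sqr_ge0 (dd y z (nz z)).
have h0 := ltW hh_gt0.
split; apply: abs_le_sq => //; lra.
Qed.

Lemma vline_conn z a lo hi : boundary S z -> connected ((fun b => mk z a b) @` `[lo, hi]).
Proof. by move=> bz; apply: (@connected_image_seg _ _ 1) => //; exact: mk_lip_b. Qed.

Lemma hline_conn z b lo hi : boundary S z -> connected ((fun a => mk z a b) @` `[lo, hi]).
Proof. by move=> bz; apply: (@connected_image_seg _ _ 1) => //; exact: mk_lip_a. Qed.

Lemma in_itvcc (lo hi t : R) : t \in `[lo, hi] <-> lo <= t <= hi.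
Proof. by rewrite /= in_itv /=. Qed.

Lemma line_ex z a : boundary S z -> `|a| <= hh ->
  exists b, `|b| <= hh /\ boundary S (mk z a b).
Proof.
move=> bz ha.
have := @crossing R S _ cS (@vline_conn z a (- hh) hh bz).
case.
- exists (mk z a (- hh)); split; first by exists (- hh) => //; apply/in_itvcc;
    have := hh_gt0; lra.
  exact: interior_subset (bottom_in bz ha).
- exists (mk z a hh); split; last exact: top_out bz ha.
  by exists hh => //; apply/in_itvcc; have := hh_gt0; lra.
- move=> y [[b /in_itvcc hb <-] by']; exists b; split => //.
  by rewrite ler_norml.
Qed.

Definition cl (s : R) : R := if s < - hh then - hh else if hh < s then hh else s.

Lemma cl_le s : `|cl s| <= hh.
Proof.
have h0 := hh_gt0; rewrite /cl ler_norml.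
case: ltP => h1; first lra.
case: ltP => h2; lra.
Qed.

Lemma cl_id s : `|s| <= hh -> cl s = s.
Proof.
rewrite ler_norml /cl => /andP[h1 h2].
case: ltP => h3; first lra.
case: ltP => h4; lra.
Qed.

Lemma cl_lip s s' : `|cl s - cl s'| <= `|s - s'|.
Proof.
have h0 := hh_gt0.
rewrite /cl; case: (ltP s (- hh)) => h1; case: (ltP hh s) => h2;
  case: (ltP s' (- hh)) => h3; case: (ltP hh s') => h4;
  rewrite ?subrr ?normr0 ?normr_ge0 //;
  rewrite ler_norml; apply/andP; split;
  (rewrite -[X in X <= _](@ger0_norm _ `|_|) ?normr_ge0 //;
   first by []) || idtac.
all: try (rewrite ler_normr; apply/orP; (left; lra) || (right; lra)).
all: try (have := ler_norm (s - s'); have := ler_norm (s' - s); rewrite distrC; lra).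
Qed.


Definition fb z (s : R) : R :=
  xget 0 [set b | `|b| <= hh /\ boundary S (mk z (cl s) b)].

Lemma fbP z s : boundary S z -> `|fb z s| <= hh /\ boundary S (mk z (cl s) (fb z s)).
Proof.
move=> bz; rewrite /fb; case: xgetP => //.
have [b hb] := line_ex bz (cl_le s).
by move=> /(_ b).
Qed.

Definition gam z (s : R) : P := mk z (cl s) (fb z s).

Lemma fb_lip z s s' : boundary S z -> `|fb z s - fb z s'| <= `|s - s'|.
Proof.
move=> bz; have [h1 b1] := fbP s bz; have [h2 b2] := fbP s' bz.
have := lip_line bz (cl_le s') h2 (cl_le s) h1 b2 b1.
move=> hl; apply: le_trans (cl_lip s s').
apply: abs_le_sq => //; rewrite real_normK ?num_real //.
Qed.

Lemma gam_lip z : boundary S z -> forall s s',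
  `|(gam z s).1 - (gam z s').1| <= 2 * `|s - s'| /\
  `|(gam z s).2 - (gam z s').2| <= 2 * `|s - s'|.
Proof.
move=> bz s s'; have [u1 u2] := nz_le1 bz.
have l1 := cl_lip s s'; have l2 := fb_lip s s' bz.
rewrite /gam /mk /tz /rot.
set n1 := (nz z).1 in u1 *; set n2 := (nz z).2 in u2 *; rewrite /=.
set c1 := cl s; set c2 := cl s'; set f1 := fb z s; set f2 := fb z s'.
rewrite -/c1 -/c2 in l1; rewrite -/f1 -/f2 in l2.
have k1 : `|c1 - c2| * `|n2| <= `|c1 - c2| by rewrite ler_piMr.
have k2 : `|c1 - c2| * `|n1| <= `|c1 - c2| by rewrite ler_piMr.
have k3 : `|f1 - f2| * `|n2| <= `|f1 - f2| by rewrite ler_piMr.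
have k4 : `|f1 - f2| * `|n1| <= `|f1 - f2| by rewrite ler_piMr.
split.
  have -> : z.1 + c1 * - n2 + f1 * n1 - (z.1 + c2 * - n2 + f2 * n1)
    = (c1 - c2) * - n2 + (f1 - f2) * n1 by ring.
  apply: le_trans (ler_normD _ _) _; rewrite (normrM (c1 - c2)) (normrM (f1 - f2)) normrN; lra.
have -> : z.2 + c1 * n1 + f1 * n2 - (z.2 + c2 * n1 + f2 * n2)
  = (c1 - c2) * n1 + (f1 - f2) * n2 by ring.
apply: le_trans (ler_normD _ _) _; rewrite (normrM (c1 - c2)) (normrM (f1 - f2)); lra.
Qed.

Lemma gam_bdry z s : boundary S z -> boundary S (gam z s).
Proof. by move=> bz; have [] := fbP s bz. Qed.

Lemma local_conn z y : boundary S z -> boundary S y -> sq y z <= hh ^+ 2 ->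
  connected_component (boundary S) z y.
Proof.
move=> bz hby hs.
have [ha hb] := bdry_mk bz hs.
set a := dd y z (tz z) in ha; set b := dd y z (nz z) in hb.
have ey : y = mk z a b by exact: mk_coord.
have h0 := hh_gt0.
have C := @connected_image_seg R (gam z) 2 (- hh) hh ltac:(lra) (gam_lip bz).
apply: (connected_component_max _ _ C).
- exists 0; first by apply/in_itvcc; lra.
  rewrite /gam cl_id ?normr0 ?ltW //.
  have [hf bf] := fbP 0 bz; rewrite cl_id ?normr0 ?ltW // in bf.
  have z0 : boundary S (mk z 0 0) by rewrite mk0.
  have h00 : `|0 : R| <= hh by rewrite normr0 ltW.
  have := uniq_line bz h00 hf h00 bf z0.
  by move=> ->; rewrite mk0.
- by move=> _ [s _ <-]; exact: gam_bdry.
exists a; first by apply/in_itvcc; rewrite -ler_norml.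
rewrite /gam cl_id //.
have [hf bf] := fbP a bz; rewrite cl_id // in bf.
rewrite ey in hby.
by rewrite ey (uniq_line bz ha hf hb bf hby).
Qed.


Local Notation NB := (~` boundary S).

Lemma sep_io C y1 y2 : connected C -> C `<=` NB -> C y1 -> S y1 -> C y2 -> ~ S y2 -> False.
Proof.
move=> cC sub c1 s1 c2 s2.
have [y [Cy By]] := crossing cS cC (ex_intro _ y1 (conj c1 s1)) (ex_intro _ y2 (conj c2 s2)).
exact: sub _ Cy By.
Qed.

Lemma int_NB y : S° y -> NB y.
Proof. by move=> iy /(bdry_closed y cS) [_]. Qed.

Lemma nS_NB y : ~ S y -> NB y.
Proof. by move=> ny /bdry_S. Qed.

Lemma BC z a b : boundary S z -> `|a| <= hh -> `|b| <= hh -> NB (mk z a b) ->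
  connected_component NB (mk z 0 (- hh)) (mk z a b) \/
  connected_component NB (mk z 0 hh) (mk z a b).
Proof.
move=> bz ha hb nb.
have h0 := hh_gt0.
move: (ha) (hb); rewrite !ler_norml => /andP[ha1 ha2] /andP[hb1 hb2].
have h00 : `|0 : R| <= hh by rewrite normr0 ltW.
have [[b1 [[l1 u1] bd1]]|nd] := pselect (exists b1, (- hh <= b1 /\ b1 <= b) /\ boundary S (mk z a b1)).
  have [[b2 [[l2 u2] bd2]]|nu'] := pselect (exists b2, (b <= b2 /\ b2 <= hh) /\ boundary S (mk z a b2)).
    exfalso.
    have e : b1 = b2.
      apply: (uniq_line bz ha) => //; rewrite ler_norml; apply/andP; split; lra.
    have eb : b1 = b by lra.
    by apply: nb; rewrite -eb.
  right.
  pose D := (fun t => mk z a t) @` `[b, hh].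
  pose H := (fun t => mk z t hh) @` `[- hh, hh].
  have cC : connected (D `|` H).
    apply: connectedU; last exact: hline_conn.
      exists (mk z a hh); split; first by exists hh => //; apply/in_itvcc; lra.
      by exists a => //; apply/in_itvcc; lra.
    exact: vline_conn.
  apply: (connected_component_max _ _ cC).
  - by right; exists 0 => //; apply/in_itvcc; lra.
  - move=> y [[t /in_itvcc ht <-]|[t /in_itvcc ht <-]].
      move=> bt; apply: nu'; exists t; split => //; lra.
    apply: nS_NB; apply: top_out => //; rewrite ler_norml; exact: ht.
  by left; exists b => //; apply/in_itvcc; lra.
left.
pose D := (fun t => mk z a t) @` `[- hh, b].
pose H := (fun t => mk z t (- hh)) @` `[- hh, hh].
have cC : connected (D `|` H).
  apply: connectedU; last exact: hline_conn.
    exists (mk z a (- hh)); split; first by exists (- hh) => //; apply/in_itvcc; lra.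
    by exists a => //; apply/in_itvcc; lra.
  exact: vline_conn.
apply: (connected_component_max _ _ cC).
- by right; exists 0 => //; apply/in_itvcc; lra.
- move=> y [[t /in_itvcc ht <-]|[t /in_itvcc ht <-]].
    move=> bt; apply: nd; exists t; split => //; lra.
  apply: int_NB; apply: bottom_in => //; rewrite ler_norml; exact: ht.
by left; exists b => //; apply/in_itvcc; lra.
Qed.


Lemma comp_ref z p : boundary S z -> NB p -> sq p z <= hh ^+ 2 ->
  connected_component NB p = connected_component NB (mk z 0 (- hh)) \/
  connected_component NB p = connected_component NB (mk z 0 hh).
Proof.
move=> bz np hs; have [ha hb] := bdry_mk bz hs.
rewrite (mk_coord p bz) in np *.
have [h|h] := BC bz ha hb np; [left|right]; apply/esym/same_connected_component => //.
Qed.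

Lemma mid_le z z' q : sq q z' <= hh ^+ 2 / 4 -> sq z' z <= hh ^+ 2 / 16 -> sq q z <= hh ^+ 2.
Proof.
move=> h1 h2; have := sq_tri3 q z' z; have := hh_gt0 => h0.
have : 0 < hh ^+ 2 by apply: exprn_gt0.
lra.
Qed.

Lemma in_ref z z' : boundary S z -> boundary S z' -> sq z' z <= hh ^+ 2 / 16 ->
  connected_component NB (mk z 0 (- hh)) = connected_component NB (mk z' 0 (- hh)).
Proof.
move=> bz bz' hs.
have h0 := hh_gt0; have r8 := r_hh.
pose q := mk z' 0 (- (hh / 2)).
have Sq : S° q by apply: mk_in => //; nra.
have c1 : connected_component NB (mk z' 0 (- hh)) q.
  apply: (connected_component_max _ _ (@vline_conn z' 0 (- hh) (- (hh / 2)) bz')).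
  - by exists (- hh) => //; apply/in_itvcc; lra.
  - move=> y [t /in_itvcc ht <-]; apply: int_NB; apply: mk_in => //; nra.
  by exists (- (hh / 2)) => //; apply/in_itvcc; lra.
have hq : sq q z <= hh ^+ 2.
  apply: (mid_le (z' := z')) => //.
  rewrite /q -{2}(mk0 z') mk_sq // !subr0; nra.
have [e|e] := comp_ref bz (int_NB Sq) hq.
  rewrite -e; apply: same_connected_component; exact: connected_component_sym.
exfalso.
have h00 : `|0 : R| <= hh by rewrite normr0 ltW.
apply: (@sep_io (connected_component NB q) q (mk z 0 hh)).
- exact: component_connected.
- exact: connected_component_sub.
- by apply: connected_component_refl; apply: int_NB.
- exact: interior_subset.
- by rewrite e; apply: connected_component_refl; apply: nS_NB; apply: top_out.
- exact: top_out.
Qed.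

Lemma out_ref z z' : boundary S z -> boundary S z' -> sq z' z <= hh ^+ 2 / 16 ->
  connected_component NB (mk z 0 hh) = connected_component NB (mk z' 0 hh).
Proof.
move=> bz bz' hs.
have h0 := hh_gt0; have r8 := r_hh.
pose q := mk z' 0 (hh / 2).
have Sq : ~ S q by apply: mk_out => //; nra.
have c1 : connected_component NB (mk z' 0 hh) q.
  apply: (connected_component_max _ _ (@vline_conn z' 0 (hh / 2) hh bz')).
  - by exists hh => //; apply/in_itvcc; lra.
  - move=> y [t /in_itvcc ht <-]; apply: nS_NB; apply: mk_out => //; nra.
  by exists (hh / 2) => //; apply/in_itvcc; lra.
have hq : sq q z <= hh ^+ 2.
  apply: (mid_le (z' := z')) => //.
  rewrite /q -{2}(mk0 z') mk_sq // !subr0; nra.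
have [e|e] := comp_ref bz (nS_NB Sq) hq; last first.
  rewrite -e; apply: same_connected_component; exact: connected_component_sym.
exfalso.
have h00 : `|0 : R| <= hh by rewrite normr0 ltW.
apply: (@sep_io (connected_component NB q) (mk z 0 (- hh)) q).
- exact: component_connected.
- exact: connected_component_sub.
- by rewrite e; apply: connected_component_refl; apply: int_NB; apply: bottom_in.
- exact: interior_subset (bottom_in bz h00).
- by apply: connected_component_refl; apply: nS_NB.
- exact: Sq.
Qed.


Definition ray x (t : R) : P := (x.1 + t, x.2).

Lemma ray_lip x s s' : `|(ray x s).1 - (ray x s').1| <= 1 * `|s - s'| /\
  `|(ray x s).2 - (ray x s').2| <= 1 * `|s - s'|.
Proof.
rewrite /ray /= subrr normr0 mul1r; split => //.
by have -> : x.1 + s - (x.1 + s') = s - s' by ring.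
Qed.

Lemma ray0 x : ray x 0 = x.
Proof. by apply: injective_projections; rewrite /ray /= ?addr0. Qed.

Lemma ray_lemma x : NB x -> bounded_plane (connected_component NB x) ->
  exists z p, boundary S z /\ connected_component NB x p /\ sq p z <= hh ^+ 2.
Proof.
move=> nx [M hM].
have h0 := hh_gt0.
pose T := `|M| + `|x.1| + 1.
have T0 : 0 < T by rewrite /T; have := normr_ge0 M; have := normr_ge0 x.1; lra.
have nT : ~ connected_component NB x (ray x T).
  move=> /hM h; have := coord1_le (0, 0) (ray x T); rewrite /ray /= sub0r normrN.
  have : M < `|x.1 + T|.
    rewrite /T; have := ler_norm M; have := ler_norm (- x.1); rewrite normrN => a1 a2.
    have : x.1 + (`|M| + `|x.1| + 1) <= `|x.1 + (`|M| + `|x.1| + 1)| by apply: ler_norm.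
    lra.
  lra.
pose Z := [set t | 0 <= t /\ t <= T /\ boundary S (ray x t)].
have Zn : Z !=set0.
  apply: contrapT => hz.
  have C := @connected_image_seg R (ray x) 1 0 T ltac:(lra) (ray_lip x).
  apply: nT; apply: (connected_component_max _ _ C).
  - by exists 0; [apply/in_itvcc; lra | exact: ray0].
  - move=> y [t /in_itvcc ht <-] bt; apply: hz; exists t; rewrite /Z /=; split; [lra | split; [lra | exact: bt]].
  by exists T => //; apply/in_itvcc; lra.
have lbZ : has_lbound Z by exists 0 => t [].
have hinf : has_inf Z by split.
pose e := hh / 4.
have e0 : 0 < e by rewrite /e; lra.
have [t1 Zt1 lt1] := inf_adherent e0 hinf.
have iZ := ge_inf lbZ.
have it1 : inf Z <= t1 := iZ _ Zt1.
case: Zt1 => t10 [t1T bt1].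
pose t0 := if inf Z - e <= 0 then 0 else inf Z - e.
have t00 : 0 <= t0 by rewrite /t0; case: ifP => h; lra.
have t0i : t0 <= inf Z.
  rewrite /t0; case: ifP => h; last lra.
  have : 0 <= inf Z by apply: lb_le_inf => // t [].
  lra.
exists (ray x t1), (ray x t0); split => //; split.
  have C := @connected_image_seg R (ray x) 1 0 t0 ltac:(lra) (ray_lip x).
  apply: (connected_component_max _ _ C).
  - by exists 0; [apply/in_itvcc; lra | exact: ray0].
  - move=> y [t /in_itvcc ht <-] bt.
    have Zt : Z t by rewrite /Z /=; split; [lra | split => //; lra].
    have := iZ _ Zt; move: ht; rewrite /t0; case: ifP => h ht ht'.
      have et : t = 0 by lra.
      by move: bt; rewrite et ray0.
    lra.
  by exists t0 => //; apply/in_itvcc; lra.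
rewrite /sq /ray /= subrr expr0n /= addr0.
have : t1 - t0 <= 2 * e.
  rewrite /t0; case: ifP => h; lra.
move=> hle; have : 0 <= t1 - t0 by lra.
move=> hge; rewrite /e in hle; nra.
Qed.

Variables (d : R).
Hypothesis dS : diam S = d%:E.

Let D := `|d|.
Let sg := r / 64.
Let N := NN D sg.

Lemma sg_hh : sg = hh / 8. Proof. by rewrite /sg /hh; field. Qed.
Lemma sg0 : 0 < sg. Proof. by rewrite /sg; have := r0; lra. Qed.
Lemma D0 : 0 <= D. Proof. exact: normr_ge0. Qed.

Lemma S_ne : exists p, S p.
Proof.
apply: contrapT => hne.
have e : [set (eucl x y)%:E | x in S & y in S] = set0.
  apply/seteqP; split => // z [x Sx [y Sy _]]; apply: hne; by exists x.
by move: dS; rewrite /diam e ereal_sup0.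
Qed.

Let p0 : P := xget (0, 0) S.
Lemma Sp0 : S p0.
Proof. rewrite /p0; case: xgetP => //; have [p Sp] := S_ne; by move=> /(_ p). Qed.

Lemma S_box y : S y -> `|y.1 - p0.1| <= D /\ `|y.2 - p0.2| <= D.
Proof.
move=> Sy.
have h : eucl p0 y <= d.
  rewrite -lee_fin -dS; apply: ereal_sup_ubound; exists p0; first exact: Sp0.
  by exists y.
have hd : d <= D by exact: ler_norm.
split; rewrite distrC.
  by apply: le_trans (coord1_le p0 y) _; lra.
by apply: le_trans (coord2_le p0 y) _; lra.
Qed.

Definition code y : nat := (idx D sg (y.1 - p0.1) * N + idx D sg (y.2 - p0.2))%N.

Lemma code_lt y : S y -> (code y < N * N)%N.
Proof.
move=> Sy; have [h1 h2] := S_box Sy.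
have a := idx_lt sg0 h1; have b := idx_lt sg0 h2.
rewrite /code -/N in a b *.
set i := idx _ _ _ in a *; set j := idx _ _ _ in b *.
apply: (@leq_trans (i * N + N)); first by rewrite ltn_add2l.
by rewrite -mulSnr leq_mul2r a orbT.
Qed.

Lemma code_eq y y' : S y -> S y' -> code y = code y' -> sq y y' <= hh ^+ 2 / 16.
Proof.
move=> Sy Sy' e.
have [h1 h2] := S_box Sy; have [h1' h2'] := S_box Sy'.
have [e1 e2] := code_dec (idx_lt sg0 h2) (idx_lt sg0 h2') e.
have k1 := idx_eq sg0 h1 h1' e1; have k2 := idx_eq sg0 h2 h2' e2.
rewrite (_ : y.1 - p0.1 - (y'.1 - p0.1) = y.1 - y'.1) in k1; last by ring.
rewrite (_ : y.2 - p0.2 - (y'.2 - p0.2) = y.2 - y'.2) in k2; last by ring.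
have q1 := sq_le_abs (ltW k1); have q2 := sq_le_abs (ltW k2).
rewrite /sq sg_hh in q1 q2 *; have := hh_gt0 => h0.
have : 0 < hh ^+ 2 by apply: exprn_gt0.
lra.
Qed.


Definition rep1 (C : set P) : P :=
  xget p0 [set x | boundary S x /\ C = connected_component (boundary S) x].

Lemma rep1P C x : boundary S x -> C = connected_component (boundary S) x ->
  boundary S (rep1 C) /\ C = connected_component (boundary S) (rep1 C).
Proof. move=> bx e; rewrite /rep1; case: xgetP => [y _ [] // | /(_ x) h]; exfalso; exact: h. Qed.

Lemma comps1 : exists n, [set connected_component (boundary S) x | x in boundary S] #= `I_n
  /\ (n <= N * N)%N.
Proof.
apply: (@count_bound _ _ (fun C => code (rep1 C))).
  move=> C [x bx e]; have [b1 _] := rep1P bx (esym e).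
  exact: code_lt (bdry_S b1).
move=> C C' [x bx e] [x' bx' e'] hc.
have [b1 c1] := rep1P bx (esym e); have [b2 c2] := rep1P bx' (esym e').
have := code_eq (bdry_S b1) (bdry_S b2) hc; rewrite sqC => hs.
have hs' : sq (rep1 C') (rep1 C) <= hh ^+ 2.
  apply: le_trans hs _; have := hh_gt0 => h0.
  have : 0 < hh ^+ 2 by apply: exprn_gt0.
  lra.
rewrite c1 c2; apply: same_connected_component; exact: local_conn.
Qed.

Definition inr z := connected_component NB (mk z 0 (- hh)).
Definition outr z := connected_component NB (mk z 0 hh).

Definition zrep (C : set P) : P :=
  xget p0 [set z | boundary S z /\ (C = inr z \/ C = outr z)].

Lemma zrepP C x : NB x -> C = connected_component NB x -> bounded_plane C ->
  boundary S (zrep C) /\ (C = inr (zrep C) \/ C = outr (zrep C)).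
Proof.
move=> nx e bC.
have bC' : bounded_plane (connected_component NB x) by rewrite -e.
have [z [p [bz [cp hs]]]] := ray_lemma nx bC'.
have np : NB p := connected_component_sub cp.
have ecp : C = connected_component NB p by rewrite e; exact: same_connected_component.
rewrite /zrep; case: xgetP => [y _ [] // | /(_ z) h]; exfalso; apply: h; split => //.
by have [e1|e1] := comp_ref bz np hs; [left|right]; rewrite ecp.
Qed.

Definition flag (C : set P) : nat := if pselect (C = inr (zrep C)) then 0%N else 1%N.

Lemma comps2 : exists m, [set C | exists2 x, NB x &
      C = connected_component NB x /\ bounded_plane C] #= `I_m
  /\ (m <= N * N * 2)%N.
Proof.
apply: (@count_bound _ _ (fun C => code (zrep C) * 2 + flag C)%N).
  move=> C [x nx [e bC]]; have [bz _] := zrepP nx e bC.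
  have hc := code_lt (bdry_S bz).
  have hf : (flag C < 2)%N by rewrite /flag; case: pselect.
  apply: (@leq_trans (code (zrep C) * 2 + 2)); first by rewrite ltn_add2l.
  by rewrite -mulSnr leq_mul2r hc orbT.
move=> C C' [x nx [e bC]] [x' nx' [e' bC']] hc.
have [bz o] := zrepP nx e bC; have [bz' o'] := zrepP nx' e' bC'.
have hf : (flag C < 2)%N by rewrite /flag; case: pselect.
have hf' : (flag C' < 2)%N by rewrite /flag; case: pselect.
have [c1 c2] := code_dec hf hf' hc.
have hs := code_eq (bdry_S bz') (bdry_S bz) (esym c1).
move: c2; rewrite /flag; case: pselect => i1; case: pselect => i2 // _.
  by rewrite i1 i2; exact: in_ref.
have o1 : C = outr (zrep C) by case: o.
have o2 : C' = outr (zrep C') by case: o'.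
by rewrite o1 o2; exact: out_ref.
Qed.


Lemma euler_part : exists e : int, euler_char (boundary S) e /\ `|e|%:~R <= A0c r d.
Proof.
have [n [hn nle]] := comps1; have [m [hm mle]] := comps2.
exists (n%:Z - m%:Z)%R; split; first by exists n, m.
rewrite intr_norm intrB /A0c.
change (NN `|d| (r / 64)) with N.
apply: le_trans (ler_normB _ _) _.
rewrite !normr_nat.
have : (n + m <= 3 * (N * N))%N.
  by move: nle mle; clear; lia.
rewrite -(ler_nat R) natrD => h.
apply: le_trans h _; rewrite lerDl; exact: ler01.
Qed.


Lemma piece_diam (xc : nat -> P) (m : nat) (y y' : P) :
  (0 < m)%N -> boundary S y -> boundary S y' -> code y = code y' ->
  (forall c, (exists x, boundary S x /\ code x = c) -> boundary S (xc c) /\ code (xc c) = c) ->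
  (forall j : nat,
     let tc := fun y => (dd y (xc (code y)) (tz (xc (code y))) + hh) * m%:R / (2 * hh) in
     j%:R <= tc y <= j.+1%:R -> j%:R <= tc y' <= j.+1%:R ->
     eucl y y' <= 4 * hh / m%:R).
Proof.
move=> m0 hy hy' ec xcP j tc /andP[t1 t2] /andP[t3 t4].
have h0 := hh_gt0.
have M0 : (0 < m%:R :> R) by rewrite ltr0n.
have [bx cx] := xcP (code y) (ex_intro _ y (conj hy erefl)).
set x := xc (code y) in bx cx.
have sx : sq y x <= hh ^+ 2.
  have := code_eq (bdry_S hy) (bdry_S bx) (esym cx).
  have : 0 < hh ^+ 2 by apply: exprn_gt0.
  lra.
have sx' : sq y' x <= hh ^+ 2.
  have := code_eq (bdry_S hy') (bdry_S bx) (etrans (esym ec) (esym cx)).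
  have : 0 < hh ^+ 2 by apply: exprn_gt0.
  lra.
have [ha hb] := bdry_mk bx sx; have [ha' hb'] := bdry_mk bx sx'.
set a := dd y x (tz x) in ha t1 t2 *; set b := dd y x (nz x) in hb.
have ey : y = mk x a b by exact: mk_coord.
have ty' : tc y' = (dd y' x (tz x) + hh) * m%:R / (2 * hh) by rewrite /tc -ec.
rewrite ty' in t3 t4.
set a' := dd y' x (tz x) in ha' t3 t4; set b' := dd y' x (nz x) in hb'.
have ey' : y' = mk x a' b' by exact: mk_coord.
have hl : (b' - b) ^+ 2 <= (a' - a) ^+ 2.
  apply: (lip_line bx) => //; [by rewrite -ey | by rewrite -ey'].
have ty : tc y = (a + hh) * m%:R / (2 * hh) by [].
rewrite ty in t1 t2.
pose w := (a - a') * m%:R / (2 * hh).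
have w1 : -1 <= w /\ w <= 1.
  have -> : w = (a + hh) * m%:R / (2 * hh) - (a' + hh) * m%:R / (2 * hh).
    by rewrite /w; field; rewrite gt_eqF.
  split; lra.
have ew : a - a' = w * (2 * hh / m%:R) by rewrite /w; field; rewrite !gt_eqF.
have hw : w ^+ 2 <= 1 by case: w1 => ? ?; nra.
set q := 2 * hh / m%:R.
have q0 : 0 < q by rewrite /q divr_gt0 // mulr_gt0.
have haa : (a - a') ^+ 2 <= q ^+ 2.
  rewrite ew exprMn; apply: ler_piMl => //; exact: sqr_ge0.
rewrite eucl_le; last by apply: divr_ge0; lra.
rewrite ey ey' mk_sq //.
have -> : 4 * hh / m%:R = 2 * q by rewrite /q; field; rewrite gt_eqF.
have e2 : (a' - a) ^+ 2 = (a - a') ^+ 2 by ring.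
have e3 : (b - b') ^+ 2 = (b' - b) ^+ 2 by ring.
rewrite e3; rewrite e2 in hl; nra.
Qed.


Lemma haus_part : (hausdorff1 (boundary S) <= (A1c r d)%:E)%E.
Proof.
rewrite /hausdorff1; apply: ge_ereal_sup => _ [del del0 <-].
rewrite /= in del0.
have h0 := hh_gt0.
pose m := (Num.truncn (4 * hh / del)).+1.
have m0 : (0 < m)%N by [].
have M0 : (0 < m%:R :> R) by rewrite ltr0n.
have mdel : 4 * hh / m%:R < del.
  have p : 0 <= 4 * hh / del by apply: divr_ge0; lra.
  have /andP[_ t2] := truncn_itv p; rewrite -/m in t2.
  rewrite ltr_pdivrMr // in t2; rewrite ltr_pdivrMr //; lra.
pose xc c := xget p0 [set x | boundary S x /\ code x = c].
have xcP : forall c, (exists x, boundary S x /\ code x = c) ->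
    boundary S (xc c) /\ code (xc c) = c.
  move=> c [x hx]; rewrite /xc; case: xgetP => [y _ [] // | /(_ x) h].
  by exfalso; apply: h.
pose tc y := (dd y (xc (code y)) (tz (xc (code y))) + hh) * m%:R / (2 * hh).
pose U (k : nat) : set P := [set y | boundary S y /\ code y = (k %/ m)%N /\
   ((k %% m)%:R <= tc y <= (k %% m).+1%:R)].
have dU : forall k, (diam (U k) <= (4 * hh / m%:R)%:E)%E.
  move=> k; rewrite /diam; apply: ge_ereal_sup => _ [y [hy [cy ty]] [y' [hy' [cy' ty']] <-]].
  rewrite lee_fin; apply: (piece_diam m0 hy hy' _ xcP ty ty').
  by rewrite cy cy'.
have cover : boundary S `<=` \bigcup_i U i.
  move=> y hy.
  have [bx cx] := xcP (code y) (ex_intro _ y (conj hy erefl)).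
  set x := xc (code y) in bx cx.
  have sx : sq y x <= hh ^+ 2.
    have := code_eq (bdry_S hy) (bdry_S bx) (esym cx).
    have : 0 < hh ^+ 2 by apply: exprn_gt0.
    lra.
  have [ha _] := bdry_mk bx sx.
  move: ha; rewrite ler_norml => /andP[a1 a2].
  have t0 : 0 <= tc y.
    rewrite /tc -/x; apply: divr_ge0; last lra.
    apply: mulr_ge0; [lra | exact: ltW].
  have tm : tc y <= m%:R.
    rewrite /tc -/x ler_pdivrMr; last lra.
    have : dd y x (tz x) + hh <= 2 * hh by lra.
    move=> hle; rewrite mulrC; apply: ler_wpM2l => //; exact: ltW.
  pose j := minn (Num.truncn (tc y)) m.-1.
  have jm : (j < m)%N by rewrite /j ltnS geq_minr.
  exists (code y * m + j)%N => //.
  split => //; rewrite divnMDl // divn_small // addn0 modnMDl modn_small //.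
  split => //.
  rewrite /j; case: (leqP (Num.truncn (tc y)) m.-1) => hj.
    by have /andP[u1 u2] := truncn_itv t0; rewrite u1 (ltW u2).
  rewrite prednK // tm andbT.
  apply: le_trans (_ : (Num.truncn (tc y))%:R <= _).
    by rewrite ler_nat; apply: ltnW; rewrite prednK in hj.
  by rewrite truncn_le.
pose K := (N * N * m)%N.
apply: le_trans (ereal_inf_lbound _) _.
  exists U => //; split => // i; apply: le_trans (dU i) _; rewrite lee_fin; exact: ltW.
apply: le_trans (@series_bound R _ K (4 * hh / m%:R) _ _ _) _.
- by move=> i; rewrite le_max lexx.
- move=> i Ki.
  have -> : U i = set0.
    apply/seteqP; split => // y [hy [cy _]].
    have := code_lt (bdry_S hy); rewrite cy ltnNge leq_divRL //.
    by rewrite /K in Ki; rewrite Ki.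
  have -> : diam (@set0 P) = -oo%E.
    rewrite /diam; rewrite (_ : [set _ | x in set0 & y in set0] = set0) ?ereal_sup0 //.
    by apply/seteqP; split => // z [x []].
  by rewrite maxeNy.
- move=> i; rewrite ge_max dU andbT lee_fin; apply: divr_ge0; lra.
rewrite lee_fin /K /A1c.
change (NN `|d| (r / 64)) with N.
have -> : (N * N * m)%:R * (4 * hh / m%:R) = 4 * hh * (N * N)%:R.
  by rewrite natrM; field; rewrite gt_eqF.
by rewrite /hh lerDl ler01.
Qed.

End Normal.

Theorem lemma3 (R : realType) (r d : R) : 0 < r ->
  exists A0 A1 : R, 0 < A0 /\ 0 < A1 /\
    forall S : set (R * R),
      compact S -> rolling r S -> rolling r (~` S) -> diam S = d%:E ->
      (exists e : int, euler_char (boundary S) e /\ (`|e|%:~R <= A0)) /\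
      (hausdorff1 (boundary S) <= A1%:E)%E.
Proof.
move=> r0; exists (A0c r d), (A1c r d); split.
  by rewrite /A0c ltr_pwDr.
split.
  rewrite /A1c ltr_pwDr // mulr_ge0 // ?ler0n // mulr_ge0 //; lra.
move=> S cpS rS rSc dS.
have cS : closed S := compact_closed (@norm_hausdorff _ _) cpS.
have E1 := euler_part r0 cS rS rSc dS. have H1 := haus_part r0 cS rS rSc dS. split; [exact E1 | exact H1].
Qed.
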